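(* If $S$ is a T2R semigroup, with $S=S_0\cup S_1$ as in the definition, then there is an element $b\in S_0$ such that $|J_b|=2$.
   Context: A semigroup $S$ is a $\Delta$-semigroup if the lattice of all congruences of $S$ is a chain with respect to inclusion. A semigroup $N$ with zero $0$ is nil if every element has some power equal to $0$; non-trivial means having more than one element. A T2R semigroup is a $\Delta$-semigroup $S$ which is the disjoint union of a non-trivial nil ideal $S_0$ (with zero $0$, which is then the zero of $S$) and a subsemigroup $S_1$ which is a two-element right zero semigroup (i.e. $S_1=\{u,v\}$ with $xy=y$ for $x,y\in S_1$). $S^1$ denotes $S$ with an identity $1$ adjoined. For $a\in S$: $J(a)=S^1aS^1$ and $J_a=\{s\in S:J(s)=J(a)\}$. *)

(* Defs.v *)
Set Implicit Arguments.

Section Semigroup.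
Variable T : Type.
Variable mul : T -> T -> T.

Definition associative_op : Prop :=
  forall x y z, mul x (mul y z) = mul (mul x y) z.

Definition is_congruence (r : T -> T -> Prop) : Prop :=
  (forall x, r x x) /\
  (forall x y, r x y -> r y x) /\
  (forall x y z, r x y -> r y z -> r x z) /\
  (forall x y c, r x y -> r (mul c x) (mul c y) /\ r (mul x c) (mul y c)).

Definition delta_semigroup : Prop :=
  forall r s, is_congruence r -> is_congruence s ->
    (forall x y, r x y -> s x y) \/ (forall x y, s x y -> r x y).

(* pow_succ x n = x^(n+1) *)
Fixpoint pow_succ (x : T) (n : nat) : T :=
  match n with
  | O => x
  | S k => mul x (pow_succ x k)
  end.

(* S^1 : S with an identity adjoined, modelled as option T (None = 1). *)
Definition lmul1 (p : option T) (x : T) : T :=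
  match p with None => x | Some a => mul a x end.
Definition rmul1 (x : T) (q : option T) : T :=
  match q with None => x | Some a => mul x a end.

(* x \in J(a) = S^1 a S^1 *)
Definition inJ (a x : T) : Prop :=
  exists p q : option T, x = lmul1 p (rmul1 a q).

Definition inJclass (a s : T) : Prop :=
  forall x, inJ s x <-> inJ a x.

(* S is a T2R semigroup with decomposition S = S0 u S1, S1 = {u, v}, zero z. *)
Definition T2R (S0 : T -> Prop) (u v z : T) : Prop :=
  associative_op /\ delta_semigroup /\
  (forall x, S0 x \/ x = u \/ x = v) /\
  ~ S0 u /\ ~ S0 v /\
  u <> v /\
  mul u u = u /\ mul u v = v /\ mul v u = u /\ mul v v = v /\
  (forall x y, S0 x -> S0 (mul x y) /\ S0 (mul y x)) /\
  S0 z /\ (forall x, S0 x -> mul z x = z /\ mul x z = z) /\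
  (forall x, S0 x -> exists n, pow_succ x n = z) /\
  (exists x, S0 x /\ x <> z).

End Semigroup.

(* Main.v *)
Require Import Defs.
From Stdlib Require Import Classical.

Section Main.
Variable T : Type.
Variable mul : T -> T -> T.
Variables (S0 : T -> Prop) (u v z : T).
Hypothesis Has : associative_op mul.
Hypothesis Hdelta : delta_semigroup mul.
Hypothesis Hcov : forall x, S0 x \/ x = u \/ x = v.
Hypothesis Hnu : ~ S0 u.
Hypothesis Hnv : ~ S0 v.
Hypothesis Huv : u <> v.
Hypothesis Huu : mul u u = u.
Hypothesis Huv' : mul u v = v.
Hypothesis Hvu : mul v u = u.
Hypothesis Hvv : mul v v = v.
Hypothesis Hid : forall x y, S0 x -> S0 (mul x y) /\ S0 (mul y x).
Hypothesis Hz : S0 z.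
Hypothesis Hz0 : forall x, S0 x -> mul z x = z /\ mul x z = z.
Hypothesis Hnil : forall x, S0 x -> exists n, pow_succ mul x n = z.
Hypothesis Hnt : exists x, S0 x /\ x <> z.

Local Notation "x ** y" := (mul x y) (at level 40, left associativity).
Local Notation L := (lmul1 mul).
Local Notation R := (rmul1 mul).

Lemma zl x : z ** x = z.
Proof.
  transitivity (z ** (z ** x)).
  - rewrite Has, (proj1 (Hz0 z Hz)); reflexivity.
  - exact (proj1 (Hz0 _ (proj1 (Hid z x Hz)))).
Qed.

Lemma zr x : x ** z = z.
Proof.
  transitivity ((x ** z) ** z).
  - rewrite <- Has, (proj1 (Hz0 z Hz)); reflexivity.
  - exact (proj2 (Hz0 _ (proj2 (Hid z x Hz)))).
Qed.

Lemma Idl x y : S0 x -> S0 (y ** x).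
Proof. intro H; exact (proj2 (Hid x y H)). Qed.
Lemma Idr x y : S0 x -> S0 (x ** y).
Proof. intro H; exact (proj1 (Hid x y H)). Qed.

Definition Uset x := x = u \/ x = v.

Lemma S1r p x : Uset p -> Uset x -> p ** x = x.
Proof. intros [->| ->] [-> | ->]; assumption. Qed.

Lemma mm_idem m y : Uset m -> m ** (m ** y) = m ** y.
Proof. intros Hm. rewrite Has, (S1r m m Hm Hm). reflexivity. Qed.

Definition cls2 (A : T -> Prop) x y := x = y \/ (A x /\ A y).
Definition cls3 (A B : T -> Prop) x y := x = y \/ (A x /\ A y) \/ (B x /\ B y).

Lemma cls2_eq A : (forall x, cls2 A x x) /\ (forall x y, cls2 A x y -> cls2 A y x) /\
  (forall x y w, cls2 A x y -> cls2 A y w -> cls2 A x w).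
Proof.
  unfold cls2; split; [|split].
  - auto.
  - intros x y [->|[]]; auto.
  - intros x y w [->|[]] [->|[]]; auto.
Qed.

Lemma cls3_eq A B : (forall x, A x -> B x -> False) ->
  (forall x, cls3 A B x x) /\ (forall x y, cls3 A B x y -> cls3 A B y x) /\
  (forall x y w, cls3 A B x y -> cls3 A B y w -> cls3 A B x w).
Proof.
  intros D; unfold cls3; split; [|split].
  - auto.
  - intros x y [->|[[]|[]]]; auto.
  - intros x y w [->|[[]|[]]] [->|[[]|[]]]; auto;
    try tauto; exfalso; apply (D y); assumption.
Qed.

Lemma ex_e : exists e, S0 e /\ e ** u <> e ** v.
Proof.
  apply NNPP; intro Hn.
  assert (Heq : forall e, S0 e -> e ** u = e ** v).
  { intros e He. apply NNPP; intro Hne. apply Hn; eauto. }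
  assert (Crho : is_congruence mul (cls2 S0)).
  { destruct (cls2_eq S0) as (?&?&?). split; [|split; [|split]]; auto.
    intros x y m [->|[Hx Hy]]; unfold cls2.
    - auto.
    - split; right; split; first [apply Idl; assumption | apply Idr; assumption]. }
  set (I := fun x => exists s y, S0 y /\ x = s ** y).
  assert (IS0 : forall x, I x -> S0 x).
  { intros x (s&y&Hy&->). exact (proj2 (Hid y s Hy)). }
  assert (Cg : is_congruence mul (cls3 Uset I)).
  { destruct (cls3_eq Uset I) as (?&?&?).
    { intros x [-> | ->] Ix; apply IS0 in Ix; auto. }
    split; [|split; [|split]]; auto.
    intros x y m [->|[[Ux Uy]|[Ix Iy]]]; unfold cls3.
    - auto.
    - split.
      + destruct (Hcov m) as [Hm|Hm].
        * left. assert (F : forall w, Uset w -> m ** w = m ** u).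
          { intros w [-> | ->]; auto. symmetry; auto. }
          rewrite (F x Ux), (F y Uy); reflexivity.
        * right; left. rewrite (S1r m x), (S1r m y); auto.
      + destruct (Hcov m) as [Hm|Hm].
        * right; right. split; [exists x | exists y]; exists m; auto.
        * left. rewrite (S1r x m), (S1r y m); auto.
    - destruct Ix as (s1&y1&Hy1&->). destruct Iy as (s2&y2&Hy2&->).
      split; right; right; split.
      + exists (m ** s1), y1; split; auto; apply Has.
      + exists (m ** s2), y2; split; auto; apply Has.
      + exists s1, (y1 ** m); split; [first [apply Idl; assumption | apply Idr; assumption]| symmetry; apply Has].
      + exists s2, (y2 ** m); split; [first [apply Idl; assumption | apply Idr; assumption]| symmetry; apply Has].
  }
  assert (HS0I : forall x, S0 x -> x = z \/ I x).
  { destruct (Hdelta _ _ Cg Crho) as [H1|H1].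
    - exfalso. destruct (H1 u v) as [E|[E _]].
      + right; left; split; unfold Uset; auto.
      + auto.
      + auto.
    - intros x Hx. destruct (H1 x z) as [E|[[_ [E|E]]|[Ix _]]].
      + right; auto.
      + auto.
      + rewrite <- E in Hnu; contradiction.
      + rewrite <- E in Hnv; contradiction.
      + auto. }
  set (d := fun x y => forall s, S0 s -> s ** x = s ** y).
  assert (Cd : is_congruence mul d).
  { unfold d; split; [|split; [|split]].
    - auto.
    - intros x y H s Hs; symmetry; auto.
    - intros x y w H1 H2 s Hs; rewrite H1, H2; auto.
    - intros x y m H; split; intros s Hs.
      + rewrite !Has. apply H. first [apply Idl; assumption | apply Idr; assumption].
      + rewrite !Has. rewrite H; auto. }
  assert (HSS : forall s x, S0 s -> S0 x -> s ** x = z).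
  { destruct (Hdelta _ _ Cd Crho) as [H1|H1].
    - exfalso. destruct (H1 u v) as [E|[E _]]; try (intros s Hs); auto.
    - intros s x Hs Hx. assert (Hxz : cls2 S0 x z) by (right; auto).
      rewrite (H1 x z Hxz s Hs). apply zr. }
  assert (Hleft : forall x, S0 x -> u ** x = v ** x).
  { intros x Hx. destruct (HS0I x Hx) as [->|(s&y&Hy&->)].
    - rewrite !zr; auto.
    - destruct (Hcov s) as [Hs|[-> | ->]].
      + rewrite (HSS s y) by auto. rewrite !zr; auto.
      + rewrite !Has, Huu, Hvu; auto.
      + rewrite !Has, Huv', Hvv; auto. }
  assert (Ct : is_congruence mul (cls2 Uset)).
  { destruct (cls2_eq Uset) as (?&?&?). split; [|split; [|split]]; auto.
    intros x y m [->|[Ux Uy]]; unfold cls2.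
    - auto.
    - split.
      + destruct (Hcov m) as [Hm|Hm].
        * left. assert (F : forall w, Uset w -> m ** w = m ** u).
          { intros w [-> | ->]; auto. symmetry; auto. }
          rewrite (F x Ux), (F y Uy); reflexivity.
        * right. rewrite (S1r m x), (S1r m y); auto.
      + destruct (Hcov m) as [Hm|Hm].
        * left. assert (F : forall w, Uset w -> w ** m = u ** m).
          { intros w [-> | ->]; auto. symmetry; auto. }
          rewrite (F x Ux), (F y Uy); reflexivity.
        * left. rewrite (S1r x m), (S1r y m); auto. }
  destruct (Hdelta _ _ Ct Crho) as [H1|H1].
  - destruct (H1 u v) as [E|[E _]]; auto. right; unfold Uset; auto.
  - destruct Hnt as [x [Hx Hxz]].
    assert (Hxz' : cls2 S0 x z) by (right; auto).
    destruct (H1 x z Hxz') as [E|[_ [E|E]]].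
    + auto.
    + rewrite E in Hz; auto.
    + rewrite E in Hz; auto.
Qed.

Lemma pow_comm x k : pow_succ mul x k ** x = x ** pow_succ mul x k.
Proof.
  induction k; simpl. reflexivity. rewrite <- Has, IHk. reflexivity.
Qed.

Lemma Rassoc x y q : R (x ** y) q = x ** R y q.
Proof. destruct q; simpl; [symmetry; apply Has | reflexivity]. Qed.

Lemma Lassoc p x y : L p (x ** y) = L p x ** y.
Proof. destruct p; simpl; [apply Has | reflexivity]. Qed.

Lemma nil_l m q a : S0 m -> a = m ** R a q -> a = z.
Proof.
  intros Hm Ha.
  assert (H : forall n, exists t, a = pow_succ mul m n ** t).
  { induction n.
    - exists (R a q); exact Ha.
    - destruct IHn as [t Ht]. exists (R t q). simpl. rewrite <- Has.
      transitivity (m ** R a q). exact Ha.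
      rewrite Ht. f_equal. apply Rassoc. }
  destruct (Hnil m Hm) as [n Hn]. destruct (H n) as [t Ht].
  rewrite Ht, Hn; apply zl.
Qed.

Lemma nil_r p n a : S0 n -> a = L p (a ** n) -> a = z.
Proof.
  intros Hn Ha.
  assert (H : forall k, exists t, a = t ** pow_succ mul n k).
  { induction k.
    - exists (L p a). simpl. rewrite <- Lassoc; exact Ha.
    - destruct IHk as [t Ht]. exists (L p t).
      transitivity (L p a ** n). rewrite <- Lassoc; exact Ha.
      rewrite Ht at 1. rewrite Lassoc. simpl. rewrite <- pow_comm.
      rewrite Has. reflexivity. }
  destruct (Hnil n Hn) as [k Hk]. destruct (H k) as [t Ht].
  rewrite Ht, Hk; apply zr.
Qed.

Definition ocomp (p p' : option T) : option T :=
  match p, p' with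
  | None, _ => p'
  | Some a, None => Some a
  | Some a, Some b => Some (a ** b)
  end.

Lemma comp_eq p q p' q' a :
  L p' (R (L p (R a q)) q') = L (ocomp p' p) (R a (ocomp q q')).
Proof. destruct p, q, p', q'; simpl; rewrite ?Has; reflexivity. Qed.

Lemma ocS0l k Q : S0 k -> exists k', ocomp (Some k) Q = Some k' /\ S0 k'.
Proof.
  intros Hk; destruct Q as [t|]; simpl; eexists; split; try reflexivity; auto.
  exact (proj1 (Hid k t Hk)).
Qed.

Lemma ocS0r P k : S0 k -> exists k', ocomp P (Some k) = Some k' /\ S0 k'.
Proof.
  intros Hk; destruct P as [t|]; simpl; eexists; split; try reflexivity; auto.
  exact (proj2 (Hid k t Hk)).
Qed.

Definition optS1 (p : option T) := p = None \/ exists m, Uset m /\ p = Some m.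

Lemma jclass a s : a <> z -> inJ mul a s -> inJ mul s a ->
  exists p q, optS1 p /\ optS1 q /\ s = L p (R a q).
Proof.
  intros Ha [p [q Hs]] [p' [q' Ha']].
  rewrite Hs, comp_eq in Ha'.
  exists p, q; split; [|split]; auto.
  - destruct p as [m|]; [|left; auto].
    destruct (Hcov m) as [Hm|Hm]; [|right; exists m; split; auto].
    exfalso; apply Ha. destruct (ocS0r p' m Hm) as [k [Hk Sk]].
    rewrite Hk in Ha'. exact (nil_l k _ a Sk Ha').
  - destruct q as [m|]; [|left; auto].
    destruct (Hcov m) as [Hm|Hm]; [|right; exists m; split; auto].
    exfalso; apply Ha. destruct (ocS0l m q' Hm) as [k [Hk Sk]].
    rewrite Hk in Ha'. exact (nil_r _ k a Sk Ha').
Qed.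

Lemma inJ_refl a : inJ mul a a.
Proof. exists None, None; reflexivity. Qed.

Lemma inJ_trans a x y : inJ mul a x -> inJ mul x y -> inJ mul a y.
Proof.
  intros [p [q Hx]] [p' [q' Hy]].
  exists (ocomp p' p), (ocomp q q'). rewrite Hy, Hx. apply comp_eq.
Qed.

Lemma key m w p' q' : Uset m -> optS1 p' -> L p' (R (m ** w) q') = m ** R w q'.
Proof.
  intros Hm Hp. rewrite Rassoc.
  destruct Hp as [->|[m' [Hm' ->]]]; simpl; [reflexivity|].
  rewrite Has, (S1r m' m); auto.
Qed.

Lemma LRz p q : L p (R z q) = z.
Proof. destruct p, q; simpl; rewrite ?zl, ?zr; reflexivity. Qed.

Lemma main_sec : exists b, S0 b /\
    exists c d, c <> d /\ (forall s, inJclass mul b s <-> (s = c \/ s = d)).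
Proof.
  destruct ex_e as [e [He Hne]].
  set (a := e ** u). set (c := e ** v).
  assert (hau : a ** u = a) by (unfold a; rewrite <- Has, Huu; reflexivity).
  assert (hav : a ** v = c) by (unfold a, c; rewrite <- Has, Huv'; reflexivity).
  assert (hcu : c ** u = a) by (unfold a, c; rewrite <- Has, Hvu; reflexivity).
  assert (Ha : a <> z).
  { intro E. apply Hne. fold a c. rewrite <- hav, E, zl; reflexivity. }
  exists a; split; [exact (proj1 (Hid e u He))|].
  exists a, c; split; [exact Hne|].
  assert (Jac : inJ mul a c) by (exists None, (Some v); simpl; auto).
  assert (Jca : inJ mul c a) by (exists None, (Some u); simpl; auto).
  intros s; split.
  - intros H.
    assert (H1 : inJ mul a s) by exact (proj1 (H s) (inJ_refl s)).
    assert (H2 : inJ mul s a) by exact (proj2 (H a) (inJ_refl a)).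
    assert (Hsz : s <> z).
    { intro E. rewrite E in H2. destruct H2 as [p [q H2]].
      apply Ha. rewrite H2. apply LRz. }
    destruct (jclass a s Ha H1 H2) as [p [q [Hp [Hq Hs]]]].
    destruct (jclass s a Hsz H2 H1) as [p' [q' [Hp' [Hq' Ha']]]].
    assert (Ht : R a q = a \/ R a q = c).
    { destruct Hq as [->|[m [[-> | ->] ->]]]; simpl; auto. }
    destruct Hp as [->|[m [Hm ->]]].
    + simpl in Hs. rewrite Hs; exact Ht.
    + simpl in Hs. rewrite Hs, key in Ha' by auto.
      assert (hma : m ** a = a).
      { rewrite Ha'. apply mm_idem; auto. }
      rewrite Hs, <- Rassoc, hma. exact Ht.
  - intros [-> | ->] x; [tauto|]. split; intro Hx.
    + exact (inJ_trans _ _ _ Jac Hx).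
    + exact (inJ_trans _ _ _ Jca Hx).
Qed.

End Main.

Theorem proposition4 (T : Type) (mul : T -> T -> T) (S0 : T -> Prop) (u v z : T) :
  T2R mul S0 u v z ->
  exists b, S0 b /\
    exists c d, c <> d /\ (forall s, inJclass mul b s <-> (s = c \/ s = d)).
Proof.
  intros (Has & Hdelta & Hcov & Hnu & Hnv & Huv & Huu & Huv' & Hvu & Hvv & Hid
          & Hz & Hz0 & Hnil & Hnt).
  eapply main_sec; eassumption.
Qed.
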